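(* Let $H$ be a separable infinite-dimensional Hilbert space and let $\Phi:\mathcal{T}(H)\to\mathcal{T}(H)$ be the channel $\Phi(X)=\sum_{k=1}^\infty u_kv_k^*Xv_ku_k^*=\sum_{k=1}^\infty E_kXE_k^*$, where $E_k=u_kv_k^*$, $u_k,v_k\in H$, $\|u_k\|=1$ for all $k$, and $\sum_{k=1}^\infty v_kv_k^*=I_H$. Let $\mathcal{M}_\Phi=\{A\in\mathcal{T}(H):\Phi(AX)=\Phi(A)\Phi(X)\text{ and }\Phi(XA)=\Phi(X)\Phi(A)\text{ for all }X\in\mathcal{T}(H)\}$ be its multiplicative domain. If an orthogonal projection $P$ lies in $\mathcal{M}_\Phi$, then every $v_k$ is an eigenvector of $P$. Moreover, any two orthogonal projections in $\mathcal{M}_\Phi$ commute.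
   Context: $\mathcal{T}(H)$ denotes the trace-class operators on $H$. (Channels of the given form are exactly the strongly entanglement breaking channels on $\mathcal{T}(H)$.) *)

(* Defs.v *)
From HB Require Import structures.
From mathcomp Require Import all_boot all_order all_algebra.
From mathcomp Require Import reals.
From mathcomp Require Import complex.
From Stdlib Require Import ClassicalEpsilon.

Set Implicit Arguments.
Unset Strict Implicit.
Unset Printing Implicit Defensive.

Import Order.TTheory GRing.Theory Num.Theory.
Local Open Scope ring_scope.

Section Hilbert.
Variables (R : realType) (H : lmodType R[i]) (ip : H -> H -> R[i]).

(* ip x y = <x, y>: conjugate-linear in x, linear in y. *)
Definition hnorm (x : H) : R := Num.sqrt (complex.Re (ip x x)).

Definition hconverges (s : nat -> H) (l : H) : Prop :=
  forall e : R, 0 < e -> exists N : nat, forall n, (N <= n)%N -> hnorm (s n - l) < e.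

Definition hcauchy (s : nat -> H) : Prop :=
  forall e : R, 0 < e -> exists N : nat, forall m n, (N <= m)%N -> (N <= n)%N ->
    hnorm (s m - s n) < e.

(* the (unique, when it exists) norm limit of a sequence *)
Definition hlim (s : nat -> H) : H := epsilon (inhabits 0) (hconverges s).

Definition orthonormal_seq (e : nat -> H) : Prop :=
  forall i j : nat, ip (e i) (e j) = (i == j)%:R.

Definition separable_infdim_hilbert : Prop :=
  (forall x y z (a : R[i]), ip x (a *: y + z) = a * ip x y + ip x z) /\
  (forall x y, ip y x = (ip x y)^*) /\
  (forall x, 0 <= ip x x) /\
  (forall x, ip x x = 0 -> x = 0) /\
  (forall s, hcauchy s -> exists l, hconverges s l) /\
  (exists d : nat -> H, forall x (e : R), 0 < e -> exists n, hnorm (x - d n) < e) /\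
  (exists e : nat -> H, orthonormal_seq e).

Definition bounded_op (T : H -> H) : Prop :=
  (forall (a : R[i]) x y, T (a *: x + y) = a *: T x + T y) /\
  (exists M : R, forall x, hnorm (T x) <= M * hnorm x).

(* trace-class operators T(H), as nuclear operators:
   T z = sum_n <b_n, z> a_n with sum_n ||a_n|| ||b_n|| < oo *)
Definition trace_class (T : H -> H) : Prop :=
  exists (a b : nat -> H),
    (exists M : R, forall n, \sum_(k < n) hnorm (a k) * hnorm (b k) <= M) /\
    (forall z, hconverges (fun n => \sum_(k < n) ip (b k) z *: a k) (T z)).

Definition orth_projection (P : H -> H) : Prop :=
  [/\ bounded_op P, (forall x, P (P x) = P x) & (forall x y, ip (P x) y = ip x (P y))].

(* sum_k v_k v_k^* = I_H  (strong operator convergence) *)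
Definition resolution_of_identity (v : nat -> H) : Prop :=
  forall x, hconverges (fun n => \sum_(k < n) ip (v k) x *: v k) x.

(* Phi(X) = sum_k u_k v_k^* X v_k u_k^*, i.e.
   Phi(X) y = sum_k <v_k, X v_k> <u_k, y> u_k *)
Definition Phi (u v : nat -> H) (X : H -> H) : H -> H :=
  fun y => hlim (fun n => \sum_(k < n) (ip (v k) (X (v k)) * ip (u k) y) *: u k).

Definition mult_domain (u v : nat -> H) (A : H -> H) : Prop :=
  trace_class A /\
  forall X : H -> H, trace_class X ->
    Phi u v (A \o X) = Phi u v A \o Phi u v X /\
    Phi u v (X \o A) = Phi u v X \o Phi u v A.

End Hilbert.

(* Main.v *)
Require Import Defs.
From HB Require Import structures.
From mathcomp Require Import all_boot all_order all_algebra.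
From mathcomp Require Import classical_sets reals complex.
From Stdlib Require Import ClassicalEpsilon FunctionalExtensionality.
From mathcomp Require Import ring lra.
Import Order.TTheory GRing.Theory Num.Theory ComplexField.Normc.
Local Open Scope ring_scope.

Set Implicit Arguments.
Unset Strict Implicit.
Unset Printing Implicit Defensive.

Section Basic.
Variable R : realType.
Local Notation C := R[i].
Local Notation RC r := (real_complex R r).

Lemma ge0_RC (z : C) : 0 <= z -> z = RC (complex.Re z).
Proof. case: z => a b; rewrite lecE /= => /andP[/eqP -> _]. by []. Qed.

Lemma RC_ge0 (r : R) : (0 <= RC r) = (0 <= r).
Proof. by rewrite lecE /= eqxx. Qed.

Lemma Re_RC (r : R) : complex.Re (RC r) = r. Proof. by []. Qed.

Lemma RC_add (a b : R) : RC (a + b) = RC a + RC b. Proof. by rewrite rmorphD. Qed.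
Lemma RC_mul (a b : R) : RC (a * b) = RC a * RC b. Proof. by rewrite rmorphM. Qed.
Lemma RC_opp (a : R) : RC (- a) = - RC a. Proof. by rewrite rmorphN. Qed.
Lemma RC_sub (a b : R) : RC (a - b) = RC a - RC b. Proof. by rewrite rmorphB. Qed.

Lemma conj_RC (r : R) : (RC r)^* = RC r.
Proof. exact: conjc_real. Qed.

Lemma mulJ (z : C) : z * z^* = RC (normc z ^+ 2).
Proof. rewrite rmorphXn /=. exact: (esym (sqr_normc z)). Qed.

Lemma mulJ' (z : C) : z^* * z = RC (normc z ^+ 2).
Proof. by rewrite mulrC mulJ. Qed.

Lemma normc_ge0' (z : C) : 0 <= normc z.
Proof. case: z => a b; rewrite /normc sqrtr_ge0 //. Qed.

Lemma normc_RC (r : R) : 0 <= r -> normc (RC r) = r.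
Proof. move=> h; rewrite /normc /= expr0n /= addr0 sqrtr_sqr ger0_norm //. Qed.

Lemma Re_le_normc (z : C) : complex.Re z <= normc z.
Proof.
case: z => a b; rewrite /normc /=.
apply: (le_trans (ler_norm a)).
rewrite -(sqrtr_sqr a); apply: ler_wsqrtr; rewrite lerDl sqr_ge0 //.
Qed.

Lemma normcJ' (z : C) : normc z^* = normc z.
Proof. case: z => a b; rewrite /normc /= sqrrN //. Qed.

Lemma ReD (a b : C) : complex.Re (a + b) = complex.Re a + complex.Re b.
Proof. by case: a; case: b. Qed.

Lemma Re_sum n (F : nat -> C) : complex.Re (\sum_(k < n) F k) = \sum_(k < n) complex.Re (F k).
Proof.
elim: n => [|n IH]; first by rewrite !big_ord0.
by rewrite !big_ord_recr /= ReD IH.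
Qed.

Lemma RC_sum n (F : nat -> R) : RC (\sum_(k < n) F k) = \sum_(k < n) RC (F k).
Proof. by rewrite rmorph_sum. Qed.

Lemma normc_sum n (F : nat -> C) : normc (\sum_(k < n) F k) <= \sum_(k < n) normc (F k).
Proof.
elim: n => [|n IH]; first by rewrite !big_ord0 normc0.
rewrite !big_ord_recr /=; apply: le_trans (le_normcD _ _) _; rewrite lerD2r //.
Qed.

Lemma conjM' (a b : C) : (a * b)^* = a^* * b^*. Proof. exact: rmorphM. Qed.
Lemma conjD' (a b : C) : (a + b)^* = a^* + b^*. Proof. exact: rmorphD. Qed.
Lemma conjN' (a : C) : (- a)^* = - a^*. Proof. exact: rmorphN. Qed.
Lemma conjB' (a b : C) : (a - b)^* = a^* - b^*. Proof. exact: rmorphB. Qed.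

Lemma conj_sum' n (F : nat -> C) : (\sum_(k < n) F k)^* = \sum_(k < n) (F k)^*.
Proof.
elim: n => [|n IH]; first by rewrite !big_ord0 conjC0.
by rewrite !big_ord_recr /= conjD' IH.
Qed.

End Basic.

Lemma real_cs_aux (R : realType) (A B n : R) :
  (forall s, 0 <= A - (s * n + s * n) + s * s * n * B) ->
  0 <= n -> 0 <= A -> 0 <= B -> n <= A * B.
Proof.
move=> h hn hA hB.
have [B0|Bp] := eqVneq B 0.
  subst B; rewrite mulr0.
  have [n0|np] := eqVneq n 0; first by rewrite n0.
  have := h ((A + 1) / n); rewrite mulr0 addr0 => h1.
  have e : (A + 1) / n * n = A + 1 by rewrite mulfVK.
  exfalso; lra.
have e : B^-1 * B = 1 by rewrite mulVf.
have := h B^-1 => h1.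
have h2 : 0 <= A - B^-1 * n by nra.
have h3 : B * (B^-1 * n) = n by rewrite mulrA (mulrC B) e mul1r.
have hBp : 0 < B by rewrite lt_def Bp hB.
nra.
Qed.

Section CS.
Variable R : realType.
Local Notation C := R[i].
Local Notation RC r := (real_complex R r).
Variable H : lmodType C.
Variable f : H -> H -> C.
Hypothesis flin : forall x y z (a : C), f x (a *: y + z) = a * f x y + f x z.
Hypothesis fsym : forall x y, f y x = (f x y)^*.
Hypothesis fpos : forall x, 0 <= f x x.

Lemma f0r x : f x 0 = 0.
Proof.
have := flin x 0 0 1; rewrite scaler0 addr0 mul1r => e.
have : f x 0 + 0 = f x 0 + f x 0 by rewrite addr0 -e.
by move/addrI => <-.
Qed.

Lemma fZr x y a : f x (a *: y) = a * f x y.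
Proof. by rewrite -[a *: y]addr0 flin f0r addr0. Qed.

Lemma fDr x y z : f x (y + z) = f x y + f x z.
Proof. by rewrite -[y]scale1r flin mul1r scale1r. Qed.

Lemma fDl x y z : f (y + z) x = f y x + f z x.
Proof. by rewrite (fsym x (y+z)) (fsym x y) (fsym x z) fDr rmorphD. Qed.

Lemma fZl x y a : f (a *: y) x = a^* * f y x.
Proof. by rewrite (fsym x (a *: y)) (fsym x y) fZr rmorphM. Qed.

Lemma f_cs x y : normc (f x y) ^+ 2 <= complex.Re (f x x) * complex.Re (f y y).
Proof.
set c := f x y; set A := complex.Re (f x x); set B := complex.Re (f y y).
have eA : f x x = RC A by apply: ge0_RC.
have eB : f y y = RC B by apply: ge0_RC.
have hA : 0 <= A by rewrite -RC_ge0 -eA.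
have hB : 0 <= B by rewrite -RC_ge0 -eB.
pose nn := normc c ^+ 2.
have hnn : 0 <= nn by rewrite exprn_ge0 // normc_ge0'.
have m1 : c * c^* = RC nn by apply: mulJ.
suff hs : forall s, 0 <= A - (s * nn + s * nn) + s * s * nn * B.
  exact: (real_cs_aux hs hnn hA hB).
move=> s.
set t := RC s * c^*.
have E : RC (A - (s * nn + s * nn) + s * s * nn * B) =
    RC A - (RC s * RC nn + RC s * RC nn) + RC s * RC s * RC nn * RC B.
  by rewrite !rmorphD !rmorphN !rmorphD !rmorphM.
have key : f (x + (- t) *: y) (x + (- t) *: y) =
   RC (A - (s * nn + s * nn) + s * s * nn * B).
  rewrite E fDr !fDl !fZr !fZl eA eB (fsym x y) -/c.
  rewrite /t !conjN' conjM' conjCK conj_RC -m1.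
  ring.
have := fpos (x + (- t) *: y); rewrite key RC_ge0 //.
Qed.

End CS.

Lemma le_eps (R : realType) (x y c : R) : 0 <= c ->
  (forall e, 0 < e -> x <= y + c * e) -> x <= y.
Proof.
move=> hc h; apply/ler_addgt0Pr => e he.
have hc1 : 0 < c + 1 by lra.
have := h (e / (c + 1)); rewrite divr_gt0 // => /(_ isT) h1.
have h2 : c * (e / (c + 1)) <= e.
  rewrite mulrA ler_pdivrMr //; nra.
lra.
Qed.

Section Hilb.
Variable R : realType.
Local Notation C := R[i].
Local Notation RC r := (real_complex R r).
Variable H : lmodType C.
Variable ip : H -> H -> C.
Hypothesis hlin : forall x y z (a : C), ip x (a *: y + z) = a * ip x y + ip x z.
Hypothesis hsym : forall x y, ip y x = (ip x y)^*.
Hypothesis hpos : forall x, 0 <= ip x x.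
Hypothesis hdef : forall x, ip x x = 0 -> x = 0.

Local Notation hn := (hnorm ip).

Lemma ip0r x : ip x 0 = 0. Proof. exact: f0r. Qed.
Lemma ipZr x y a : ip x (a *: y) = a * ip x y. Proof. exact: fZr. Qed.
Lemma ipDr x y z : ip x (y + z) = ip x y + ip x z. Proof. exact: fDr. Qed.
Lemma ipDl x y z : ip (y + z) x = ip y x + ip z x. Proof. exact: fDl. Qed.
Lemma ipZl x y a : ip (a *: y) x = a^* * ip y x. Proof. exact: fZl. Qed.
Lemma ipNr x y : ip x (- y) = - ip x y.
Proof. by rewrite -scaleN1r ipZr mulN1r. Qed.
Lemma ipBr x y z : ip x (y - z) = ip x y - ip x z.
Proof. by rewrite ipDr ipNr. Qed.
Lemma ipNl x y : ip (- y) x = - ip y x.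
Proof. by rewrite -scaleN1r ipZl conjN' conjC1 mulN1r. Qed.
Lemma ipBl x y z : ip (y - z) x = ip y x - ip z x.
Proof. by rewrite ipDl ipNl. Qed.
Lemma ip0l x : ip 0 x = 0.
Proof. by rewrite hsym ip0r conjC0. Qed.
Lemma ip_sumr x n (F : nat -> H) : ip x (\sum_(k < n) F k) = \sum_(k < n) ip x (F k).
Proof.
elim: n => [|n IH]; first by rewrite !big_ord0 ip0r.
by rewrite !big_ord_recr /= ipDr IH.
Qed.

Lemma hn_ge0 x : 0 <= hn x. Proof. exact: sqrtr_ge0. Qed.

Lemma Re_ipxx_ge0 x : 0 <= complex.Re (ip x x).
Proof. by rewrite -RC_ge0 -ge0_RC. Qed.

Lemma hn_sq x : hn x ^+ 2 = complex.Re (ip x x).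
Proof. by rewrite sqr_sqrtr // Re_ipxx_ge0. Qed.

Lemma ipxx x : ip x x = RC (hn x ^+ 2).
Proof. by rewrite hn_sq -ge0_RC. Qed.

Lemma cs x y : normc (ip x y) <= hn x * hn y.
Proof.
have h := f_cs hlin hsym hpos x y.
have -> : normc (ip x y) = Num.sqrt (normc (ip x y) ^+ 2).
  by rewrite sqrtr_sqr ger0_norm // normc_ge0'.
rewrite /hnorm -sqrtrM ?Re_ipxx_ge0 //; exact: ler_wsqrtr.
Qed.

Lemma hn0 : hn 0 = 0.
Proof. by rewrite /hnorm ip0r sqrtr0. Qed.

Lemma hn_eq0 x : hn x = 0 -> x = 0.
Proof. by move=> h; apply: hdef; rewrite ipxx h expr0n. Qed.

Lemma hnZ a x : hn (a *: x) = normc a * hn x.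
Proof.
rewrite {1}/hnorm ipZl ipZr mulrA mulJ' ipxx -rmorphM Re_RC -exprMn sqrtr_sqr.
rewrite ger0_norm //; apply: mulr_ge0; [exact: normc_ge0' | exact: hn_ge0].
Qed.

Lemma hnN x : hn (- x) = hn x.
Proof. by rewrite -scaleN1r hnZ normcN normc1 mul1r. Qed.

Lemma hnB x y : hn (x - y) = hn (y - x).
Proof. by rewrite -hnN opprB. Qed.

Lemma Re_conj (z : C) : complex.Re z^* = complex.Re z.
Proof. by case: z. Qed.

Lemma hnD x y : hn (x + y) <= hn x + hn y.
Proof.
have e : complex.Re (ip (x + y) (x + y)) =
   hn x ^+ 2 + hn y ^+ 2 + complex.Re (ip x y) + complex.Re (ip x y).
  rewrite ipDl !ipDr (hsym x y) !ReD Re_conj !hn_sq; lra.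
have h1 := Re_le_normc (ip x y).
have h2 := cs x y.
have hx := hn_ge0 x; have hy := hn_ge0 y.
rewrite /hnorm e -[X in _ <= X]ger0_norm ?addr_ge0 // -sqrtr_sqr.
apply: ler_wsqrtr; rewrite /hnorm in hx hy h2 *.
nra.
Qed.

Lemma hn_sum n (F : nat -> H) : hn (\sum_(k < n) F k) <= \sum_(k < n) hn (F k).
Proof.
elim: n => [|n IH]; first by rewrite !big_ord0 hn0.
rewrite !big_ord_recr /=; apply: le_trans (hnD _ _) _; rewrite lerD2r //.
Qed.


Hypothesis hcomp : forall s, hcauchy ip s -> exists l, hconverges ip s l.

Lemma ReB (a b : C) : complex.Re (a - b) = complex.Re a - complex.Re b.
Proof. by case: a; case: b. Qed.

Lemma hconv_unique s l l' : hconverges ip s l -> hconverges ip s l' -> l = l'.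
Proof.
move=> h1 h2; apply/eqP; rewrite -subr_eq0; apply/eqP; apply: hn_eq0.
apply/eqP; rewrite eq_le hn_ge0 andbT.
apply: (@le_eps _ _ 0 2) => // e he.
have [N1 hN1] := h1 e he; have [N2 hN2] := h2 e he.
have a1 := hN1 (maxn N1 N2) (leq_maxl _ _).
have a2 := hN2 (maxn N1 N2) (leq_maxr _ _).
have -> : l - l' = (s (maxn N1 N2) - l') - (s (maxn N1 N2) - l).
  by rewrite opprB [RHS]addrC addrA subrK.
apply: le_trans (hnD _ _) _; rewrite hnN; lra.
Qed.

Lemma hlim_eq s l : hconverges ip s l -> hlim ip s = l.
Proof.
move=> h; rewrite /hlim.
have := epsilon_spec (inhabits 0) (hconverges ip s) (ex_intro _ l h).
move=> h'; exact: hconv_unique h' h.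
Qed.

Lemma sum_prefix (t : nat -> R) N n : (forall m, 0 <= t m) -> (N <= n)%N ->
  \sum_(m < N) t m <= \sum_(m < n) t m.
Proof.
move=> ht; elim: n => [|n IH]; first by rewrite leqn0 => /eqP ->.
rewrite leq_eqVlt => /orP[/eqP -> //|]; rewrite ltnS => /IH h.
rewrite big_ord_recr /=; apply: le_trans h _; rewrite lerDl //.
Qed.

Lemma term_le_sum (t : nat -> R) k : (forall m, 0 <= t m) -> t k <= \sum_(m < k.+1) t m.
Proof.
move=> ht; rewrite big_ord_recr /= lerDr; apply: sumr_ge0 => i _; exact: ht.
Qed.

Lemma nonneg_lim a (S : nat -> H) l (t : nat -> R) (L : R) :
  hconverges ip S l -> complex.Re (ip a l) <= L ->
  (forall n, ip a (S n) = RC (\sum_(m < n) t m)) -> (forall m, 0 <= t m) ->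
  forall N, \sum_(m < N) t m <= L.
Proof.
move=> hS hL hSn ht N.
apply: (le_eps (hn_ge0 a)) => e he.
have [N0 hN0] := hS e he.
set n := maxn N N0.
apply: le_trans (sum_prefix ht (leq_maxl N N0)) _.
have -> : \sum_(m < n) t m = complex.Re (ip a (S n)) by rewrite hSn Re_RC.
have -> : ip a (S n) = ip a l + ip a (S n - l) by rewrite ipBr addrC subrK.
rewrite ReD; apply: lerD => //.
apply: le_trans (Re_le_normc _) _; apply: le_trans (cs _ _) _.
apply: ler_wpM2l; first exact: hn_ge0.
by apply/ltW/hN0; rewrite leq_maxr.
Qed.

Lemma series_conv (c : nat -> C) (w : nat -> H) (B : R) :
  (forall k, hn (w k) <= 1) -> (forall n, \sum_(k < n) normc (c k) <= B) ->
  exists l, hconverges ip (fun n => \sum_(k < n) c k *: w k) l.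
Proof.
move=> hw hB; apply: hcomp.
set S := fun n => \sum_(k < n) c k *: w k.
set sg := fun n => \sum_(k < n) normc (c k).
have sgmono : forall N n, (N <= n)%N -> sg N <= sg n.
  move=> N n hNn; apply: (@sum_prefix (fun k => normc (c k))) => // m.
  exact: normc_ge0'.
have step : forall n d, hn (S (n + d)%N - S n) <= sg (n + d)%N - sg n.
  move=> n; elim=> [|d IH]; first by rewrite addn0 !subrr hn0.
  rewrite addnS /S /sg !big_ord_recr /= -/(S (n + d)%N) -/(sg (n + d)%N) -/(S n) -/(sg n).
  rewrite addrAC; apply: le_trans (hnD _ _) _.
  rewrite hnZ; have := hw (n + d)%N; have := normc_ge0' (c (n + d)%N).
  have := hn_ge0 (w (n + d)%N); nra.
pose E : set R := fun x => exists n, x = sg n.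
have hE : has_sup E.
  split; first by exists (sg 0%N), 0%N.
  by exists B => y [n ->]; exact: hB.
move=> e he.
have [x [N ->] hx] := sup_adherent he hE.
exists N => m n hm hn'.
have ub : forall k, sg k <= sup E by move=> k; apply: sup_upper_bound => //; exists k.
have key : forall p q, (N <= p)%N -> (p <= q)%N -> hn (S q - S p) < e.
  move=> p q hp hpq; rewrite -(subnKC hpq).
  apply: le_lt_trans (step _ _) _.
  have := ub (p + (q - p))%N; have := sgmono _ _ hp; lra.
have [hmn|hnm] := leqP m n.
  by rewrite hnB; apply: key.
by apply: key => //; apply: ltnW.
Qed.

Lemma bounded_zero T : bounded_op ip T -> T 0 = 0.
Proof.
case=> [hT _]; have := hT 1 0 0; rewrite !scale1r addr0 => e.
have : T 0 + 0 = T 0 + T 0 by rewrite addr0 -e.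
by move/addrI => <-.
Qed.

Lemma bounded_Z T a x : bounded_op ip T -> T (a *: x) = a *: T x.
Proof. move=> hT; have := hT.1 a x 0; by rewrite !addr0 bounded_zero // addr0. Qed.

Lemma bounded_B T x y : bounded_op ip T -> T (x - y) = T x - T y.
Proof.
move=> hT; have := hT.1 (-1) y x; rewrite !scaleN1r => e.
by rewrite addrC e addrC.
Qed.

Lemma bounded_D T x y : bounded_op ip T -> T (x + y) = T x + T y.
Proof. by move=> hT; rewrite -{1}[x]scale1r hT.1 scale1r. Qed.

Lemma bounded_sum T n (F : nat -> H) : bounded_op ip T ->
  T (\sum_(k < n) F k) = \sum_(k < n) T (F k).
Proof.
move=> hT; elim: n => [|n IH]; first by rewrite !big_ord0 bounded_zero.
by rewrite !big_ord_recr /= bounded_D // IH.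
Qed.

Lemma bounded_conv T s l : bounded_op ip T -> hconverges ip s l ->
  hconverges ip (fun n => T (s n)) (T l).
Proof.
move=> hT hs e he.
have [M hM] := hT.2.
have hM1 : 0 < `|M| + 1 by have := normr_ge0 M; lra.
have [N hN] := hs (e / (`|M| + 1)) (divr_gt0 he hM1).
exists N => n hn; rewrite -bounded_B //.
apply: le_lt_trans (hM _) _.
have h1 := hN n hn; have h2 := hn_ge0 (s n - l); have h3 := ler_norm M.
have h4 : (`|M| + 1) * (e / (`|M| + 1)) = e by rewrite mulrC mulfVK // gt_eqF.
nra.
Qed.


Variable v : nat -> H.
Hypothesis hv : resolution_of_identity ip v.

Lemma bessel a N : \sum_(m < N) normc (ip (v m) a) ^+ 2 <= hn a ^+ 2.
Proof.
apply: (@nonneg_lim a (fun n => \sum_(k < n) ip (v k) a *: v k) a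
  (fun m => normc (ip (v m) a) ^+ 2) (hn a ^+ 2)) => //.
- by rewrite hn_sq.
- move=> n /=; rewrite (ip_sumr a n (fun k => ip (v k) a *: v k)).
  rewrite (RC_sum n (fun m => normc (ip (v m) a) ^+ 2)); apply: eq_bigr => k _.
  by rewrite ipZr (hsym (v k) a) mulJ.
- move=> m; rewrite exprn_ge0 // normc_ge0' //.
Qed.

Section G.
Variable N : nat.
Definition gN (x y : H) : C := \sum_(m < N) ip x (v m) * ip (v m) y.

Lemma gN_lin x y z (a : C) : gN x (a *: y + z) = a * gN x y + gN x z.
Proof.
rewrite /gN mulr_sumr -big_split /=; apply: eq_bigr => m _.
by rewrite hlin; ring.
Qed.

Lemma gN_sym x y : gN y x = (gN x y)^*.
Proof.
rewrite /gN (conj_sum' N (fun m => ip x (v m) * ip (v m) y)); apply: eq_bigr => m _.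
by rewrite conjM' -!hsym mulrC.
Qed.

Lemma gN_xx x : gN x x = RC (\sum_(m < N) normc (ip (v m) x) ^+ 2).
Proof.
rewrite /gN (RC_sum N (fun m => normc (ip (v m) x) ^+ 2)); apply: eq_bigr => m _.
by rewrite (hsym (v m) x) mulrC mulJ.
Qed.

Lemma gN_pos x : 0 <= gN x x.
Proof.
rewrite gN_xx RC_ge0; apply: sumr_ge0 => m _; rewrite exprn_ge0 // normc_ge0' //.
Qed.

Lemma gN_bound x y : normc (gN x y) <= hn x * hn y.
Proof.
have h := f_cs gN_lin gN_sym gN_pos x y.
rewrite !gN_xx !Re_RC in h.
have hx := bessel x N; have hy := bessel y N.
have hxx : 0 <= \sum_(m < N) normc (ip (v m) x) ^+ 2.
  by apply: sumr_ge0 => m _; rewrite exprn_ge0 // normc_ge0'.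
have hyy : 0 <= \sum_(m < N) normc (ip (v m) y) ^+ 2.
  by apply: sumr_ge0 => m _; rewrite exprn_ge0 // normc_ge0'.
have h2 : normc (gN x y) ^+ 2 <= (hn x * hn y) ^+ 2.
  rewrite exprMn; apply: le_trans h _; apply: ler_pM => //.
rewrite -ler_sqr // ?nnegrE ?normc_ge0' //; apply: mulr_ge0; exact: hn_ge0.
Qed.

End G.

Lemma finite_eventually (Q : nat -> nat -> Prop) :
  (forall m, exists N0, forall n, (N0 <= n)%N -> Q m n) ->
  forall N, exists n0, forall n, (n0 <= n)%N -> forall m, (m < N)%N -> Q m n.
Proof.
move=> h; elim=> [|N [n0 IH]]; first by exists 0%N => n _ m.
have [N1 h1] := h N.
exists (maxn n0 N1) => n hn m; rewrite ltnS leq_eqVlt => /orP[/eqP ->|hm].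
  by apply: h1; apply: leq_trans hn; rewrite leq_maxr.
by apply: IH => //; apply: leq_trans hn; rewrite leq_maxl.
Qed.

Lemma proj_ip P x : orth_projection ip P -> ip x (P x) = RC (hn (P x) ^+ 2).
Proof.
case=> _ hPP hPs; by rewrite -hPP -hPs hPP ipxx.
Qed.

Lemma trace_bound P : orth_projection ip P -> trace_class ip P ->
  exists M, forall N, \sum_(m < N) hn (P (v m)) ^+ 2 <= M.
Proof.
move=> hP [a [b [[M hM] hconvP]]].
exists M => N.
have hc : 0 <= \sum_(m < N) hn (v m) by apply: sumr_ge0 => m _; exact: hn_ge0.
apply: (le_eps hc) => e he.
set Sn := fun n z => \sum_(j < n) ip (b j) z *: a j.
have [n0 hn0] := finite_eventually
  (Q := fun m n => hn (Sn n (v m) - P (v m)) < e)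
  (fun m => hconvP (v m) e he) N.
have hn1 := hn0 n0 (leqnn n0).
have step : forall m : 'I_N, hn (P (v m)) ^+ 2 <=
    complex.Re (ip (v m) (Sn n0 (v m))) + hn (v m) * e.
  move=> m; rewrite -(Re_RC (hn (P (v m)) ^+ 2)) -proj_ip //.
  have -> : ip (v m) (P (v m)) = ip (v m) (Sn n0 (v m)) - ip (v m) (Sn n0 (v m) - P (v m)).
    by rewrite ipBr opprB addrC subrK.
  rewrite ReB lerD2l.
  have := Re_le_normc (- ip (v m) (Sn n0 (v m) - P (v m))).
  rewrite normcN => h1.
  have h1' : complex.Re (- ip (v m) (Sn n0 (v m) - P (v m))) =
     - complex.Re (ip (v m) (Sn n0 (v m) - P (v m))) by case: (ip _ _).
  rewrite -h1'; apply: le_trans h1 _; apply: le_trans (cs _ _) _.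
  apply: ler_wpM2l; first exact: hn_ge0.
  exact/ltW/hn1.
apply: le_trans (ler_sum _ (fun m _ => step m)) _.
rewrite big_split /= -mulr_suml -(Re_sum N (fun i => ip (v i) (Sn n0 (v i)))).
have -> : \sum_(i < N) ip (v i) (Sn n0 (v i)) = \sum_(j < n0) gN N (b j) (a j).
  rewrite /gN exchange_big /=; apply: eq_bigr => m _.
  rewrite /Sn (ip_sumr (v m) n0 (fun j => ip (b j) (v m) *: a j)).
  apply: eq_bigr => j _; by rewrite ipZr.
rewrite lerD2r; apply: le_trans (Re_le_normc _) _.
apply: le_trans (normc_sum n0 (fun j => gN N (b j) (a j))) _.
apply: le_trans (hM n0); apply: ler_sum => j _.
by rewrite mulrC; apply: gN_bound.
Qed.


Variable u : nat -> H.
Hypothesis hu : forall k, hn (u k) = 1.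

Lemma ip_u_le k x : normc (ip (u k) x) <= hn x.
Proof. by apply: le_trans (cs _ _) _; rewrite hu mul1r. Qed.

Lemma normc_sq_ge0 (z : C) : 0 <= normc z ^+ 2.
Proof. by rewrite exprn_ge0 // normc_ge0'. Qed.

Lemma rank1_tc w : trace_class ip (fun z => ip w z *: w).
Proof.
exists (fun _ => w), (fun j => if j == 0%N then w else 0); split.
  exists (hn w * hn w) => n; case: n => [|n].
    by rewrite big_ord0; apply: mulr_ge0; exact: hn_ge0.
  rewrite big_ord_recl /= big1 ?addr0 // => i _; by rewrite hn0 mulr0.
move=> z e he; exists 1%N => n; case: n => [//|n] _.
rewrite big_ord_recl /= big1 ?addr0 ?subrr ?hn0 // => i _.
by rewrite ip0l scale0r.
Qed.

Lemma eigen P k : orth_projection ip P -> mult_domain ip u v P ->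
  exists lam : C, P (v k) = lam *: v k.
Proof.
move=> hP [hPtc hMD].
have hPb := hP.
case: hPb => [hPbd hPP hPs].
have [Pk0|Pk0] := eqVneq (P (v k)) 0.
  by exists 0; rewrite scale0r.
exists 1; rewrite scale1r.
set w := v k - P (v k).
have Pw0 : P w = 0 by rewrite /w bounded_B // hPP subrr.
set X := fun z => ip w z *: w.
have [e1 _] := hMD X (rank1_tc w).
have e2 := congr1 (fun F => F (u k)) e1; simpl in e2.
have L0 : Phi ip u v (P \o X) (u k) = 0.
  rewrite /Phi; apply: hlim_eq => e he; exists 0%N => n _.
  rewrite big1 ?subrr ?hn0 // => l _ /=.
  by rewrite /X bounded_Z // Pw0 scaler0 ip0r mul0r scale0r.
rewrite L0 in e2.
set Wu := Phi ip u v X (u k).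
pose xl := fun l => normc (ip (v l) w) ^+ 2.
have hxl : forall l, ip (v l) (X (v l)) = RC (xl l).
  by move=> l; rewrite /X ipZr (hsym (v l) w) mulJ'.
have [lX hlX] : exists lX, hconverges ip
    (fun n => \sum_(l < n) (ip (v l) (X (v l)) * ip (u l) (u k)) *: u l) lX.
  apply: (@series_conv (fun l => ip (v l) (X (v l)) * ip (u l) (u k)) u (hn w ^+ 2)).
    by move=> l; rewrite hu.
  move=> n; apply: le_trans (bessel w n); apply: ler_sum => l _.
  rewrite normcM hxl normc_RC ?normc_sq_ge0 //.
  have := ip_u_le l (u k); rewrite hu => h1.
  have := normc_sq_ge0 (ip (v l) w); rewrite /xl; nra.
have eWu : Wu = lX by rewrite /Wu /Phi (hlim_eq hlX).
rewrite -eWu in hlX.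
have [MP hMP] := trace_bound hP hPtc.
have [lP hlP] : exists lP, hconverges ip
    (fun n => \sum_(m < n) (ip (v m) (P (v m)) * ip (u m) Wu) *: u m) lP.
  apply: (@series_conv (fun m => ip (v m) (P (v m)) * ip (u m) Wu) u (MP * hn Wu)).
    by move=> l; rewrite hu.
  move=> n; apply: (@le_trans _ _ ((\sum_(m < n) hn (P (v m)) ^+ 2) * hn Wu)); last first.
    exact: (ler_wpM2r (hn_ge0 Wu) (hMP n)).
  rewrite mulr_suml; apply: ler_sum => m _.
  rewrite normcM proj_ip // normc_RC ?exprn_ge0 ?hn_ge0 //.
  apply: ler_wpM2l; [exact: exprn_ge0 (hn_ge0 _) | exact: ip_u_le].
have ePW : Phi ip u v P Wu = lP by rewrite /Phi (hlim_eq hlP).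
rewrite -/Wu ePW in e2; rewrite -e2 in hlP.
have t1 := @nonneg_lim Wu _ 0 (fun m => hn (P (v m)) ^+ 2 * normc (ip (u m) Wu) ^+ 2) 0 hlP.
have t1k : hn (P (v k)) ^+ 2 * normc (ip (u k) Wu) ^+ 2 <= 0.
  have ht1 : forall m, 0 <= hn (P (v m)) ^+ 2 * normc (ip (u m) Wu) ^+ 2.
    by move=> m; apply: mulr_ge0; [exact: exprn_ge0 (hn_ge0 _) | exact: normc_sq_ge0].
  apply: le_trans (@term_le_sum _ k ht1) _.
  apply: t1.
  - by rewrite ip0r.
  - move=> n /=.
    rewrite (ip_sumr Wu n (fun m => (ip (v m) (P (v m)) * ip (u m) Wu) *: u m)).
    rewrite (RC_sum n (fun m => hn (P (v m)) ^+ 2 * normc (ip (u m) Wu) ^+ 2)).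
    apply: eq_bigr => m _.
    by rewrite ipZr proj_ip // (hsym (u m) Wu) -mulrA mulJ RC_mul.
  - by move=> m; apply: mulr_ge0; [exact: exprn_ge0 (hn_ge0 _) | exact: normc_sq_ge0].
have hPk : 0 < hn (P (v k)).
  rewrite lt_def hn_ge0 andbT; apply/eqP => h; move/eqP: Pk0; apply.
  exact: hn_eq0.
have uW0 : ip (u k) Wu = 0.
  apply: eq0_normc.
  have h2 : 0 < hn (P (v k)) ^+ 2 by rewrite exprn_gt0.
  have h3 := normc_sq_ge0 (ip (u k) Wu).
  have h4 : normc (ip (u k) Wu) ^+ 2 <= 0 by nra.
  have h5 := normc_ge0' (ip (u k) Wu).
  nra.
have t2 := @nonneg_lim (u k) _ Wu (fun l => xl l * normc (ip (u l) (u k)) ^+ 2) 0 hlX.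
have t2k : xl k * normc (ip (u k) (u k)) ^+ 2 <= 0.
  have ht2 : forall m, 0 <= xl m * normc (ip (u m) (u k)) ^+ 2.
    by move=> m; apply: mulr_ge0; exact: normc_sq_ge0.
  apply: le_trans (@term_le_sum _ k ht2) _.
  apply: t2.
  - by rewrite uW0.
  - move=> n /=.
    rewrite (ip_sumr (u k) n (fun l => (ip (v l) (X (v l)) * ip (u l) (u k)) *: u l)).
    rewrite (RC_sum n (fun l => xl l * normc (ip (u l) (u k)) ^+ 2)).
    apply: eq_bigr => l _.
    rewrite ipZr hxl (hsym (u l) (u k)) -mulrA mulJ /xl [RHS]RC_mul.
    congr (_ * _); rewrite -RC_mul; congr (real_complex R _); by rewrite expr2.
  - by move=> m; apply: mulr_ge0; exact: normc_sq_ge0.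
have ukk : normc (ip (u k) (u k)) = 1 by rewrite ipxx hu expr1n normc_RC.
rewrite ukk expr1n mulr1 /xl in t2k.
have vw0 : ip (v k) w = 0.
  apply: eq0_normc; have := normc_sq_ge0 (ip (v k) w).
  have := normc_ge0' (ip (v k) w); nra.
have ww : ip w w = 0.
  rewrite {1}/w ipBl vw0 hPs Pw0 ip0r subrr //.
have := hn_eq0 (x := w); rewrite /hnorm ww /= sqrtr0 => /(_ erefl) /eqP.
by rewrite subr_eq0 => /eqP.
Qed.


Lemma proj_commute P Q : orth_projection ip P -> mult_domain ip u v P ->
  orth_projection ip Q -> mult_domain ip u v Q -> P \o Q = Q \o P.
Proof.
move=> hP mP hQ mQ; apply: functional_extensionality => x /=.
have [hPb _ _] := hP; have [hQb _ _] := hQ.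
set T := fun n => \sum_(k < n) ip (v k) x *: v k.
have hT : hconverges ip T x := hv x.
have c1 := bounded_conv hPb (bounded_conv hQb hT).
have c2 := bounded_conv hQb (bounded_conv hPb hT).
have ext : (fun n => P (Q (T n))) = (fun n => Q (P (T n))).
  apply: functional_extensionality => n.
  rewrite /T (bounded_sum (T:=Q) n (fun k => ip (v k) x *: v k) hQb).
  rewrite (bounded_sum (T:=P) n (fun k => ip (v k) x *: v k) hPb).
  rewrite (bounded_sum (T:=P) n (fun k => Q (ip (v k) x *: v k)) hPb).
  rewrite (bounded_sum (T:=Q) n (fun k => P (ip (v k) x *: v k)) hQb).
  apply: eq_bigr => k _.
  have [lp ep] := eigen k hP mP; have [lq eq1] := eigen k hQ mQ.
  rewrite (bounded_Z _ _ hQb) (bounded_Z _ _ hPb) (bounded_Z _ _ hPb) (bounded_Z _ _ hQb).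
  rewrite ep eq1 (bounded_Z _ _ hPb) (bounded_Z _ _ hQb) ep eq1 !scalerA.
  by rewrite -!mulrA (mulrC lp lq).
rewrite ext in c1; exact: hconv_unique c1 c2.
Qed.

End Hilb.

Theorem proposition3p4 (R : realType) (H : lmodType R[i]) (ip : H -> H -> R[i])
    (hH : separable_infdim_hilbert ip) (u v : nat -> H)
    (hu : forall k, hnorm ip (u k) = 1)
    (hv : resolution_of_identity ip v) :
  (forall P : H -> H, orth_projection ip P -> mult_domain ip u v P ->
     forall k, exists lam : R[i], P (v k) = lam *: v k) /\
  (forall P Q : H -> H, orth_projection ip P -> mult_domain ip u v P ->
     orth_projection ip Q -> mult_domain ip u v Q ->
     P \o Q = Q \o P).
Proof.
case: hH => [hlin [hsym [hpos [hdef [hcomp _]]]]].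
split.
  move=> P hP mP k; exact: (eigen hlin hsym hpos hdef hcomp hv hu k hP mP).
move=> P Q hP mP hQ mQ; exact: (proj_commute hlin hsym hpos hdef hcomp hv hu hP mP hQ mQ).
Qed.
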